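(* Let $\mathbb{F}\in\{\mathbb{R},\mathbb{C}\}$, let $m\le n\le 2m$, and let $A_1,\dots,A_m$ be $2\times n$ matrices over $\mathbb{F}$, viewed as the $2\times n\times m$ tensor $(A_1;\dots;A_m)$. Suppose $\dim\langle A_1,\dots,A_m\rangle=m$. Let $\ell\le\lfloor n/2\rfloor$ be an integer such that for every choice of scalars $c_{j,t}\in\mathbb{F}$ ($1\le j\le\ell$, $\ell+1\le t\le m$), setting $A'_j=A_j+c_{j,\ell+1}A_{\ell+1}+\cdots+c_{j,m}A_m$, the $n\times 2\ell$ matrix $({A'_1}^T,\dots,{A'_\ell}^T)$ has rank $2\ell$. Then $\mathrm{rank}_{\mathbb{F}}(A_1;\dots;A_m)\ge m+\ell$.
   Context: $(A_1;\dots;A_r)$ denotes the $p\times n\times r$ tensor whose $k$-th slice is the $p\times n$ matrix $A_k$; $(X_1,\dots,X_r)$ denotes horizontal concatenation of matrices; $\langle A_1,\dots,A_m\rangle$ is the $\mathbb{F}$-linear span of the matrices. A rank-one tensor is one whose slices are $\gamma_k\,\mathbf{a}\mathbf{b}^T$ ($k=1,\dots,r$) for fixed nonzero vectors $\mathbf{a},\mathbf{b}$ and a nonzero vector $(\gamma_1,\dots,\gamma_r)$; $\mathrm{rank}_{\mathbb{F}}$ of a tensor is the minimal number of rank-one tensors over $\mathbb{F}$ summing (slicewise) to it. *)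

(* Defs.v *)
From HB Require Import structures.
From mathcomp Require Import all_boot all_order all_algebra.
Set Implicit Arguments. Unset Strict Implicit. Unset Printing Implicit Defensive.
Import Order.TTheory GRing.Theory Num.Theory.
Local Open Scope ring_scope.

(* A p x n x r tensor (A_1; ...; A_r) is represented by its family of
   slices  T : 'I_r -> 'M[F]_(p, n)  (slice k is T k). *)

Definition rank_one_tensor (F : fieldType) (p n r : nat)
    (T : 'I_r -> 'M[F]_(p, n)) : Prop :=
  exists (a : 'cV[F]_p) (b : 'cV[F]_n) (g : 'I_r -> F),
    [/\ a != 0, b != 0, (exists k, g k != 0)
      & forall k, T k = g k *: (a *m b^T)].

Definition tensor_rank_le (F : fieldType) (p n r : nat)
    (T : 'I_r -> 'M[F]_(p, n)) (k : nat) : Prop :=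
  exists S : 'I_k -> 'I_r -> 'M[F]_(p, n),
    (forall i, rank_one_tensor (S i)) /\
    (forall t, T t = \sum_(i < k) S i t).

Definition tensor_rank_ge (F : fieldType) (p n r : nat)
    (T : 'I_r -> 'M[F]_(p, n)) (k : nat) : Prop :=
  forall k', tensor_rank_le T k' -> (k <= k')%N.

(* the slice A_j (0-based index j, as a nat); 0 if out of range *)
Definition slice (F : fieldType) (p n m : nat)
    (A : 'I_m -> 'M[F]_(p, n)) (j : nat) : 'M[F]_(p, n) :=
  odflt 0 (omap A (insub j)).

(* A'_j = A_j + sum_{t >= l} c_{j,t} A_t   (0-based: j < l, l <= t < m) *)
Definition Aprime (F : fieldType) (p n m l : nat)
    (A : 'I_m -> 'M[F]_(p, n)) (c : 'I_l -> 'I_m -> F) (j : 'I_l)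
    : 'M[F]_(p, n) :=
  slice A j + \sum_(t < m | (l <= t)%N) c j t *: A t.

Definition Claim6 (F : fieldType) : Prop :=
  forall (m n l : nat) (A : 'I_m -> 'M[F]_(2, n)),
    (m <= n <= 2 * m)%N ->
    \rank (\matrix_(i < m) mxvec (A i)) = m ->
    (l <= n./2)%N ->
    (forall c : 'I_l -> 'I_m -> F,
        \rank (\mxrow_(j < l) (Aprime A c j)^T) = (2 * l)%N) ->
    tensor_rank_ge A (m + l).

(* Main.v *)
Require Import Defs.
From HB Require Import structures.
From mathcomp Require Import all_boot all_order all_algebra.
Set Implicit Arguments. Unset Strict Implicit. Unset Printing Implicit Defensive.
Import Order.TTheory GRing.Theory Num.Theory.
Local Open Scope ring_scope.

Lemma claim6_any (F : fieldType) : Claim6 F.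
Proof.
move=> m n l A /andP[_ Hn2m] Hrk Hl Hc k' [S [HS Hsum]].
have lm : (l <= m)%N.
  apply: (leq_trans Hl); rewrite -(half_double m) -mul2n; exact: half_leq.
have /fin_all_exists [abg Habg] : forall i, exists abg : 'cV[F]_2 * 'cV[F]_n * {ffun 'I_m -> F},
    forall t, S i t = abg.2 t *: (abg.1.1 *m abg.1.2^T).
  move=> i; case: (HS i) => a [b [g [_ _ _ Hg]]].
  by exists (a, b, [ffun t => g t]) => t /=; rewrite ffunE.
pose a i := (abg i).1.1; pose b i := (abg i).1.2; pose g i t := (abg i).2 t.
have HA : forall t, A t = \sum_(i < k') g i t *: (a i *m (b i)^T).
  by move=> t; rewrite Hsum; apply: eq_bigr => i _; rewrite Habg.
pose G : 'M[F]_(k', m) := \matrix_(i, t) g i t.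
pose Bm : 'M[F]_(k', 2 * n) := \matrix_i mxvec (a i *m (b i)^T).
have HGB : \matrix_(t < m) mxvec (A t) = G^T *m Bm.
  apply/matrixP => t c; rewrite !mxE HA linear_sum summxE.
  by apply: eq_bigr => i _; rewrite linearZ !mxE.
have fullG : row_full G.
  rewrite /row_full eqn_leq rank_leq_col /= -{1}Hrk HGB.
  by apply: leq_trans (mxrankM_maxl _ _) _; rewrite mxrank_tr.
have km : (m <= k')%N by rewrite -(eqP fullG) rank_leq_row.
pose E : 'M[F]_(m - l, m) := \matrix_(s, t) ((t : nat) == (s : nat) + l)%N%:R.
have EEt : E *m E^T = 1%:M.
  apply/matrixP => s s'; rewrite !mxE.
  have st : (s + l < m)%N by rewrite addnC -ltn_subRL ltn_ord.
  rewrite (bigD1 (Ordinal st)) //= big1 ?addr0; last first.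
    move=> t /negbTE; rewrite -val_eqE /= !mxE => ->; by rewrite mul0r.
  rewrite !mxE eqxx mul1r eqn_add2r.
  by rewrite -val_eqE /=; case: eqP.
have /row_fullP [L HL] := fullG.
pose H := G *m E^T.
have fullH : row_full H.
  by apply/row_fullP; exists (E *m L); rewrite mulmxA -(mulmxA E) HL mulmx1 EEt.
pose f := fullrankfun fullH.
pose Hs := rowsub f H.
have Hsu : Hs \in unitmx by apply: fullrowsub_unit.
pose jm (j : 'I_l) : 'I_m := widen_ord lm j.
pose z (j : 'I_l) : 'cV[F]_(m - l) := - (invmx Hs *m (rowsub f G *m delta_mx (jm j) 0)).
pose y j := E^T *m z j.
pose X j := delta_mx (jm j) 0 + y j.
pose c (j : 'I_l) (t : 'I_m) := y j t 0.
have C1 : forall j, rowsub f G *m X j = 0.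
  move=> j; rewrite mulmxDr /y mulmxA.
  have -> : rowsub f G *m E^T = Hs by rewrite mul_rowsub_mx.
  by rewrite /z mulmxN mulKVmx // addrN.
have C2 : forall j (s : 'I_(m - l)), (G *m X j) (f s) 0 = 0.
  move=> j s; have := congr1 (fun M : 'cV[F]_(m - l) => M s 0) (C1 j).
  by rewrite mul_rowsub_mx /= mxE [in RHS]mxE.
have C3 : forall j (t : 'I_m), (t < l)%N -> y j t 0 = 0.
  move=> j t Ht; rewrite mxE big1 // => s _; rewrite !mxE.
  suff -> : ((t : nat) == (s : nat) + l)%N = false by rewrite mul0r.
  by apply/negbTE; rewrite neq_ltn ltn_addl.
have Gen : forall x : 'cV[F]_m,
    \sum_t x t 0 *: A t = \sum_i (G *m x) i 0 *: (a i *m (b i)^T).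
  move=> x; under eq_bigr => t _ do rewrite HA scaler_sumr.
  rewrite exchange_big; apply: eq_bigr => i _.
  rewrite mxE scaler_suml; apply: eq_bigr => t _.
  by rewrite scalerA mxE mulrC.
have C4 : forall j, Aprime A c j = \sum_i (G *m X j) i 0 *: (a i *m (b i)^T).
  move=> j; rewrite -Gen /Aprime.
  have -> : slice A j = A (jm j).
    rewrite /slice; case: insubP => [u _ Hu | /negP []]; last first.
      exact: (leq_trans (ltn_ord j) lm).
    by congr (A _); apply: val_inj; rewrite Hu.
  have -> : \sum_(t < m | (l <= t)%N) c j t *: A t = \sum_t y j t 0 *: A t.
    rewrite [RHS](bigID (fun t : 'I_m => (l <= t)%N)) /= [X in _ = _ + X]big1 ?addr0 //.
    by move=> t; rewrite -ltnNge => Ht; rewrite C3 // scale0r.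
  under [RHS]eq_bigr => t _ do rewrite mxE scalerDl.
  rewrite big_split /=; congr (_ + _).
  rewrite (bigD1 (jm j)) //= big1 ?addr0; first by rewrite mxE !eqxx scale1r.
  by move=> t Ht; rewrite mxE (negbTE Ht) scale0r.
pose Bz : 'M[F]_(k', n) := \matrix_(i, cc) (if i \in codom f then 0 else b i cc 0).
pose Q (j : 'I_l) : 'M[F]_(k', 2) := \matrix_(i, r) ((G *m X j) i 0 * a i r 0).
have C5 : forall j, (Aprime A c j)^T = Bz^T *m Q j.
  move=> j; rewrite C4 /Q; move: (C2 j); move: (G *m X j) => Y C2j.
  apply/matrixP => cc r; rewrite !mxE summxE.
  apply: eq_bigr => i _.
  case: (boolP (i \in codom f)) => [/codomP [s ->] | Hi].
    by rewrite !mxE C2j !mul0r mulr0.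
  rewrite !mxE big_ord1 !mxE (negbTE Hi).
  by rewrite mulrA mulrC mulrA.
have HM : \mxrow_(j < l) (Aprime A c j)^T = Bz^T *m \mxrow_j Q j.
  by rewrite mul_mxrow; apply: eq_mxrow.
have H2l : (2 * l <= \rank Bz)%N.
  rewrite -(Hc c) HM -[X in (_ <= X)%N]mxrank_tr; exact: mxrankM_maxl.
pose R : 'M[F]_(m - l, k') := rowsub f 1%:M.
have RB : R *m Bz = 0.
  by rewrite mul_rowsub_mx mul1mx; apply/matrixP => s cc; rewrite !mxE codom_f.
have HR : (\rank R <= k' - \rank Bz)%N.
  by rewrite -mxrank_ker; apply: mxrankS; apply/sub_kermxP.
have HR2 : (m - l <= \rank R)%N.
  by apply: leq_trans _ (mxrankM_maxl R H); rewrite -rowsubE mxrank_fullrowsub.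
have H6 : (m - l + \rank Bz <= k')%N.
  by rewrite addnC -leq_subRL ?rank_leq_row // (leq_trans HR2 HR).
rewrite -[m](subnK lm) -addnA addnn -mul2n.
by apply: leq_trans H6; rewrite leq_add2l.
Qed.

Theorem mainTheorem6 :
  (forall F : rcfType, Claim6 F) /\ (forall F : numClosedFieldType, Claim6 F).
Proof. by split => F; apply: claim6_any. Qed.
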